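(* For every finite graph $G$, $\mathrm{cw}(G) \leq 2^{\mathrm{mcw}(G)}$.
   Context: A $k$-expression is built from: atoms $i(v)$ creating a vertex $v$ with label $i\in\{1,\dots,k\}$; $\eta_{i,j}$ ($i\neq j$) adding an edge between every vertex labeled $i$ and every vertex labeled $j$; $\rho_{i\to j}$ changing every label $i$ to $j$; and $\oplus$, disjoint union. The generated graph is obtained by deleting labels. The clique-width $\mathrm{cw}(G)$ is the smallest $k$ such that $G$ is generated by a $k$-expression. A multi-$k$-expression is built as follows, where each vertex carries a (possibly empty) set of labels from $\{1,\dots,k\}$: atoms $m\langle i_1,\dots,i_\ell\rangle$ (with $m$ a positive integer and $i_1<\dots<i_\ell\le k$, possibly $\ell=0$) create $m$ vertices, each with label set $\{i_1,\dots,i_\ell\}$; $\eta_{i,j}$ creates an edge between every vertex having label $i$ and every vertex having label $j$, allowed only when no vertex has both labels $i$ and $j$; $\rho_{i\to S}$ for $S\subseteq\{1,\dots,k\}$ replaces label $i$ by the set $S$ (a vertex with label set $S'\ni i$ gets $(S'\setminus\{i\})\cup S$); $\varepsilon_i$ deletes label $i$ from all vertices; $\oplus$ is disjoint union. The generated graph is obtained by deleting all labels. The multi-clique-width $\mathrm{mcw}(G)$ is the smallest $k$ such that $G$ is generated by a multi-$k$-expression. *)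

(* Defs.v *)
From mathcomp Require Import all_boot.
Set Implicit Arguments. Unset Strict Implicit. Unset Printing Implicit Defensive.

(* Labelled graphs produced by (multi-)k-expressions: vertices are 'I_nv,
   each vertex carries a label of type L ('I_k for k-expressions,
   {set 'I_k} for multi-k-expressions); adj is the (symmetric) edge relation. *)
Record lgraph (L : Type) := LGraph { nv : nat; lab : 'I_nv -> L; adj : rel 'I_nv }.
Arguments LGraph {L} nv lab adj.
Arguments nv {L} l.
Arguments lab {L} l _.
Arguments adj {L} l _ _.

Definition lunion L (g1 g2 : lgraph L) : lgraph L :=
  LGraph (nv g1 + nv g2)
    (fun x => match split x with inl a => lab g1 a | inr b => lab g2 b end)
    (fun x y => match split x, split y with
                | inl a, inl b => adj g1 a b
                | inr a, inr b => adj g2 a b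
                | _, _ => false end).

Definition ladd L (P Q : pred L) (g : lgraph L) : lgraph L :=
  LGraph (nv g) (lab g)
    (fun x y => [|| adj g x y, P (lab g x) && Q (lab g y) | Q (lab g x) && P (lab g y)]).

Definition lrelab L (f : L -> L) (g : lgraph L) : lgraph L :=
  LGraph (nv g) (fun x => f (lab g x)) (adj g).

Inductive kexp (k : nat) : Type :=
| KAtom of 'I_k
| KEta of 'I_k & 'I_k & kexp k
| KRho of 'I_k & 'I_k & kexp k
| KUnion of kexp k & kexp k.

Fixpoint keval k (t : kexp k) : option (lgraph 'I_k) :=
  match t with
  | KAtom i => Some (LGraph 1 (fun _ => i) (fun _ _ => false))
  | KEta i j t => if i == j then None
                  else omap (ladd (pred1 i) (pred1 j)) (keval t)
  | KRho i j t => omap (lrelab (fun l => if l == i then j else l)) (keval t)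
  | KUnion t1 t2 => match keval t1, keval t2 with
                    | Some g1, Some g2 => Some (lunion g1 g2)
                    | _, _ => None end
  end.

Inductive mexp (k : nat) : Type :=
| MAtom of nat & {set 'I_k}
| MEta of 'I_k & 'I_k & mexp k
| MRho of 'I_k & {set 'I_k} & mexp k
| MEps of 'I_k & mexp k
| MUnion of mexp k & mexp k.

Fixpoint meval k (t : mexp k) : option (lgraph {set 'I_k}) :=
  match t with
  | MAtom m A => if m is 0 then None
                 else Some (LGraph m (fun _ => A) (fun _ _ => false))
  | MEta i j t =>
      match meval t with
      | Some g => if [forall x : 'I_(nv g), ~~ ((i \in lab g x) && (j \in lab g x))]
                  then Some (ladd (fun B : {set 'I_k} => i \in B) (fun B : {set 'I_k} => j \in B) g)
                  else None
      | None => None end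
  | MRho i A t =>
      omap (lrelab (fun S' : {set 'I_k} => if i \in S' then (S' :\ i) :|: A else S')) (meval t)
  | MEps i t => omap (lrelab (fun S' : {set 'I_k} => S' :\ i)) (meval t)
  | MUnion t1 t2 => match meval t1, meval t2 with
                    | Some g1, Some g2 => Some (lunion g1 g2)
                    | _, _ => None end
  end.

Definition lgraph_iso L (g : lgraph L) (T : finType) (e : rel T) : Prop :=
  exists f : 'I_(nv g) -> T, bijective f /\ forall x y, adj g x y = e (f x) (f y).

Definition kgen (k : nat) (T : finType) (e : rel T) : Prop :=
  exists (t : kexp k) g, keval t = Some g /\ lgraph_iso g e.

Definition mgen (k : nat) (T : finType) (e : rel T) : Prop :=
  exists (t : mexp k) g, meval t = Some g /\ lgraph_iso g e.

Definition is_cw (T : finType) (e : rel T) (c : nat) : Prop :=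
  kgen c e /\ forall k, k < c -> ~ kgen k e.

Definition is_mcw (T : finType) (e : rel T) (c : nat) : Prop :=
  mgen c e /\ forall k, k < c -> ~ mgen k e.

(* Main.v *)
Require Import Defs.
From mathcomp Require Import all_boot.
Arguments bijective {A B} f.

Lemma card_setI k : #|{set 'I_k}| = 2 ^ k.
Proof.
rewrite -cardsT.
have -> : [set: {set 'I_k}] = powerset [set: 'I_k].
  by apply/setP=> B; rewrite !inE subsetT.
by rewrite card_powerset cardsT card_ord.
Qed.

Definition sim {n L} (g' : lgraph 'I_n) (g : lgraph L) (A : rel 'I_(nv g))
  (lb : 'I_(nv g) -> 'I_n) :=
  exists f : 'I_(nv g') -> 'I_(nv g),
    [/\ bijective f, forall x y, adj g' x y = A (f x) (f y) & forall x, lab g' x = lb (f x)].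

Lemma sim_ext {n L} (g' : lgraph 'I_n) (g : lgraph L) A lb A' lb' :
  sim g' g A lb -> (forall x y, A x y = A' x y) -> (forall x, lb x = lb' x) ->
  sim g' g A' lb'.
Proof.
case=> f [fb fa fl] hA hl; exists f; split=> // x *; by rewrite ?fa ?fl.
Qed.

Fixpoint etas {n} (s : seq ('I_n * 'I_n)) (t : kexp n) : kexp n :=
  match s with [::] => t | p :: s => KEta p.1 p.2 (etas s t) end.

Definition ekey {n} (a b : 'I_n) (p : 'I_n * 'I_n) :=
  ((a == p.1) && (b == p.2)) || ((a == p.2) && (b == p.1)).

Lemma etasP {n L} (s : seq ('I_n*'I_n)) t (g' : lgraph 'I_n) (g : lgraph L) A lb :
 all (fun p => p.1 != p.2) s -> keval t = Some g' -> sim g' g A lb ->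
 exists g'', keval (etas s t) = Some g'' /\
   sim g'' g (fun x y => A x y || has (ekey (lb x) (lb y)) s) lb.
Proof.
elim: s => [|p s IH] /=.
  move=> _ -> hs; exists g'; split=> //; apply: sim_ext hs _ _ => // x y; by rewrite orbF.
case/andP=> hp hs kt hsim.
have [g1 [k1 [f [fb fa fl]]]] := IH hs kt hsim.
rewrite k1 (negbTE hp) /=.
eexists; split; first reflexivity.
exists f; split=> // x y /=.
rewrite fa !fl /ekey.
by case: (A _ _); case: (has _ _); case: (_ == p.1); case: (_ == p.2); case: (_ == p.1);
  case: (_ == p.2).
Qed.

Fixpoint rhos {n} (s : seq ('I_n * 'I_n)) (t : kexp n) : kexp n :=
  match s with [::] => t | p :: s => KRho p.1 p.2 (rhos s t) end.

Definition step n (p : 'I_n * 'I_n) (l : 'I_n) := if l == p.1 then p.2 else l.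

Lemma rhosP {n L} (s : seq ('I_n*'I_n)) t (g' : lgraph 'I_n) (g : lgraph L) A lb :
 keval t = Some g' -> sim g' g A lb ->
 exists g'', keval (rhos s t) = Some g'' /\
   sim g'' g A (fun x => foldr (@step n) (lb x) s).
Proof.
elim: s => [|p s IH] /=.
  by move=> -> hs; exists g'.
move=> kt hsim.
have [g1 [k1 [f [fb fa fl]]]] := IH kt hsim.
rewrite k1 /=.
eexists; split; first reflexivity.
exists f; split=> // x /=.
by rewrite fl.
Qed.

Lemma idem_fold n (phi : 'I_n -> 'I_n) (r : seq 'I_n) l :
  (forall a, phi (phi a) = phi a) ->
  foldr (@step n) l [seq (a, phi a) | a <- r] = if l \in r then phi l else l.
Proof.
move=> hid; elim: r => [|a r IH] //=.
rewrite IH /step /= in_cons.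
case: (l =P a) => [->|/eqP nla] /=.
  by case: (a \in r); case: eqP => // ->.
case: (l \in r).
  by case: eqP => // e; rewrite -e hid.
by rewrite (negbTE nla).
Qed.

Lemma unionP {n L} (c : L -> 'I_n) (g1' g2' : lgraph 'I_n) (g1 g2 : lgraph L) :
  sim g1' g1 (adj g1) (fun x => c (lab g1 x)) ->
  sim g2' g2 (adj g2) (fun x => c (lab g2 x)) ->
  sim (lunion g1' g2') (lunion g1 g2) (adj (lunion g1 g2)) (fun x => c (lab (lunion g1 g2) x)).
Proof.
case=> f1 [[h1 hf1 fh1] fa1 fl1]; case=> f2 [[h2 hf2 fh2] fa2 fl2].
pose f (x : 'I_(nv g1' + nv g2')) : 'I_(nv g1 + nv g2) :=
  unsplit (match split x with inl a => inl (f1 a) | inr b => inr (f2 b) end).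
pose h (x : 'I_(nv g1 + nv g2)) : 'I_(nv g1' + nv g2') :=
  unsplit (match split x with inl a => inl (h1 a) | inr b => inr (h2 b) end).
exists f; split.
- exists h => x; rewrite /f /h unsplitK; rewrite -[RHS]splitK;
    case: (split x) => a /=; by rewrite ?hf1 ?hf2 ?fh1 ?fh2.
- move=> x y; rewrite /= /f !unsplitK.
  by case: (split x) => a; case: (split y) => b.
- move=> x; rewrite /= /f !unsplitK.
  by case: (split x) => a.
Qed.

Fixpoint katoms {n} (a : 'I_n) (m : nat) : kexp n :=
  match m with 0 => KAtom a | m.+1 => KUnion (KAtom a) (katoms a m) end.

Lemma katomsP {n} (a : 'I_n) m : exists g', keval (katoms a m) = Some g' /\
  [/\ nv g' = m.+1, forall x, lab g' x = a & forall x y, adj g' x y = false].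
Proof.
elim: m => [|m [g [kg [nvg lg ag]]]] /=.
  by eexists; split; first reflexivity.
rewrite kg; eexists; split; first reflexivity.
split => /=; first by rewrite nvg.
  by move=> x; case: (split x) => b.
by move=> x y; case: (split x) => b; case: (split y) => b'.
Qed.


Definition Fm {k} (i : 'I_k) (A S' : {set 'I_k}) := if i \in S' then (S' :\ i) :|: A else S'.

Lemma Fidem k (i : 'I_k) (A S : {set 'I_k}) : Fm i A (Fm i A S) = Fm i A S.
Proof.
rewrite /Fm.
case iS: (i \in S); last by rewrite iS.
case iA: (i \in A).
  rewrite !inE iA orbT; apply/setP=> x; rewrite !inE.
  by case: (x == i); case: (x \in A); case: (x \in S).
by rewrite !inE eqxx iA /=.
Qed.

Lemma Gidem k (i : 'I_k) (S : {set 'I_k}) : (S :\ i) :\ i = S :\ i.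
Proof. by apply/setP=> x; rewrite !inE; case: (x == i). Qed.

Lemma mainsim k (t : mexp k) g : meval t = Some g ->
  exists (t' : kexp #|{set 'I_k}|) g', keval t' = Some g' /\
    sim g' g (adj g) (fun x => enum_rank (lab g x)).
Proof.
elim: t g => [m A|i j t IH|i A t IH|i t IH|t1 IH1 t2 IH2] g /=.
- case: m => [//|m] [<-].
  have [g' [kg [nvg lg ag]]] := katomsP (enum_rank A) m.
  exists (katoms (enum_rank A) m), g'; split => //.
  exists (cast_ord nvg); split.
  + by exists (cast_ord (esym nvg)) => x; rewrite ?cast_ordK ?cast_ordKV.
  + by move=> x y; rewrite ag.
  + by move=> x; rewrite lg.
- case E: (meval t) => [g0|//]; case: ifP => // cond [<-].
  have [t' [g' [kt hs]]] := IH _ E.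
  set s := [seq (enum_rank p.1, enum_rank p.2) | p <- enum (fun p : {set 'I_k} * {set 'I_k} => [&& i \in p.1, j \in p.2 & p.1 != p.2])].
  have hall : all (fun p => p.1 != p.2) s.
    apply/allP => q /mapP [p]; rewrite mem_enum => /and3P [_ _ np] -> /=.
    by rewrite (inj_eq enum_rank_inj).
  have [g'' [kg hs2]] := etasP _ _ _ _ _ _ hall kt hs.
  exists (etas s t'), g''; split => //.
  apply: sim_ext hs2 _ _ => // x y /=.
  congr (_ || _).
  move/forallP: cond => cond.
  apply/idP/idP.
  + case/hasP => q /mapP [p]; rewrite mem_enum => /and3P [ip jp np] -> /=.
    rewrite /ekey /= !(inj_eq enum_rank_inj).
    by case/orP => /andP [/eqP -> /eqP ->]; rewrite ip jp ?orbT.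
  + case/orP => /andP [ix jy]; apply/hasP.
    * exists (enum_rank (lab g0 x), enum_rank (lab g0 y)); last by rewrite /ekey !eqxx.
      apply/mapP; exists (lab g0 x, lab g0 y) => //.
      rewrite mem_enum unfold_in /= ix jy /=; apply/eqP => exy.
      rewrite exy in ix; have := cond y; by rewrite ix jy.
    * exists (enum_rank (lab g0 y), enum_rank (lab g0 x)); last by rewrite /ekey !eqxx orbT.
      apply/mapP; exists (lab g0 y, lab g0 x) => //.
      rewrite mem_enum unfold_in /= jy ix /=; apply/eqP => exy.
      rewrite exy in jy; have := cond x; by rewrite ix jy.
- case E: (meval t) => [g0|//] [<-].
  have [t' [g' [kt hs]]] := IH _ E.
  pose F := Fm i A.
  pose phi := fun l : 'I_#|{set 'I_k}| => enum_rank (F (enum_val l)).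
  have hid : forall a, phi (phi a) = phi a.
    by move=> a; rewrite /phi enum_rankK; congr enum_rank; exact: Fidem.
  have [g'' [kg hs2]] := rhosP [seq (a, phi a) | a <- enum 'I_#|{set 'I_k}|] _ _ _ _ _ kt hs.
  exists (rhos [seq (a, phi a) | a <- enum 'I_#|{set 'I_k}|] t'), g''; split => //.
  apply: sim_ext hs2 _ _ => // x /=.
  by rewrite idem_fold // mem_enum /phi enum_rankK.
- case E: (meval t) => [g0|//] [<-].
  have [t' [g' [kt hs]]] := IH _ E.
  pose phi := fun l : 'I_#|{set 'I_k}| => enum_rank ((enum_val l) :\ i).
  have hid : forall a, phi (phi a) = phi a.
    by move=> a; rewrite /phi enum_rankK Gidem.
  have [g'' [kg hs2]] := rhosP [seq (a, phi a) | a <- enum 'I_#|{set 'I_k}|] _ _ _ _ _ kt hs.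
  exists (rhos [seq (a, phi a) | a <- enum 'I_#|{set 'I_k}|] t'), g''; split => //.
  apply: sim_ext hs2 _ _ => // x /=.
  by rewrite idem_fold // mem_enum /phi enum_rankK.
- case E1: (meval t1) => [g1|//]; case E2: (meval t2) => [g2|//] [<-].
  have [t1' [g1' [k1 hs1]]] := IH1 _ E1.
  have [t2' [g2' [k2 hs2]]] := IH2 _ E2.
  exists (KUnion t1' t2'), (lunion g1' g2'); rewrite /= k1 k2; split => //.
  exact: unionP.
Qed.

Theorem mainTheorem2 (T : finType) (e : rel T)
  (e_sym : symmetric e) (e_irr : irreflexive e) (c m : nat) :
  is_cw e c -> is_mcw e m -> c <= 2 ^ m.
Proof.
case=> _ hc [[t [g [mt [f0 [fb fa]]]]] _].
have [t' [g' [kt [f [hb ha _]]]]] := mainsim _ _ _ mt.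
rewrite leqNgt; apply/negP => lt.
apply: (hc _ lt); rewrite -card_setI.
exists t', g'; split => //.
exists (f0 \o f); split; first exact: bij_comp.
by move=> x y; rewrite ha fa.
Qed.
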